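(* For natural numbers $n\ge1$, $k\ge 3$ and $k_1,\dots,k_n\ge 3$, the total domination polynomials of the lollipop graph $L(n,1)$, of the firecracker graph $F(n,k)$, and of the generalized firecracker graph $F(k_1,\dots,k_n)$ are unimodal.
   Context: $L(n,1)$ is the complete graph $K_n$ with one extra vertex joined by a pendant edge to one vertex of $K_n$. For $k\ge 3$, $S_k$ denotes the star with $k$ vertices ($K_{1,k-1}$). The generalized firecracker $F(k_1,\dots,k_n)$ is obtained from stars $S_{k_1},\dots,S_{k_n}$ by choosing one leaf $\ell_i$ of $S_{k_i}$ for each $i$ and adding the edges $\ell_i\ell_{i+1}$ ($1\le i<n$); $F(n,k)=F(k,\dots,k)$ ($n$ copies). For a finite simple graph $G=(V,E)$, a set $D\subseteq V$ is a total dominating set if every vertex of $V$ is adjacent to some vertex of $D$; $d_t(G,i)$ is the number of total dominating sets of size $i$, and $D_t(G,x)=\sum_{i} d_t(G,i)x^i$. A polynomial $\sum a_ix^i$ is unimodal if its coefficient sequence $a_0,\dots,a_N$ satisfies $a_0\le\dots\le a_k\ge a_{k+1}\ge\dots\ge a_N$ for some $k$. *)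

(* Defs.v *)
From mathcomp Require Import all_boot all_order all_algebra.
Set Implicit Arguments. Unset Strict Implicit. Unset Printing Implicit Defensive.
Import Order.TTheory GRing.Theory Num.Theory.

(* A finite simple graph is a symmetric irreflexive relation e on a finType T. *)

Definition total_dominating (T : finType) (e : rel T) (D : {set T}) : bool :=
  [forall v, [exists u in D, e v u]].

Definition dt (T : finType) (e : rel T) (i : nat) : nat :=
  #|[set D : {set T} | total_dominating e D & #|D| == i]|.

(* D_t(G,x) = sum_i d_t(G,i) x^i  (d_t(G,i) = 0 for i > |V|) *)
Definition Dt (T : finType) (e : rel T) : {poly int} :=
  \poly_(i < #|T|.+1) ((dt e i)%:R)%R.

Definition unimodal (p : {poly int}) : Prop :=
  exists k : nat,
    (forall i, (i < k)%N -> (p`_i <= p`_i.+1)%R) /\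
    (forall i, (k <= i)%N -> (i.+1 < size p)%N -> (p`_i.+1 <= p`_i)%R).

(* Lollipop L(n,1): vertices 0..n; 0..n-1 form K_n, vertex n is pendant to 0. *)
Definition lollipop_adj (n : nat) : rel 'I_n.+1 :=
  fun x y => (x != y) &&
    [|| ((x < n) && (y < n))%N,
        ((x == n :> nat) && (y == 0 :> nat)) |
        ((x == 0 :> nat) && (y == n :> nat))].

(* Generalized firecracker F(k_1,...,k_n): vertex (i, j) with j < k_i;
   j = 0 is the center of star S_{k_i}, j = 1 is the chosen leaf l_i,
   j >= 2 the other leaves. Edges: center-leaf within a star, and l_i l_{i+1}. *)
Definition gfirecracker_adj (n : nat) (k : 'I_n -> nat) :
    rel {i : 'I_n & 'I_(k i)} :=
  fun x y =>
    ((tag x == tag y) &&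
       [|| ((tagged x == 0 :> nat) && (tagged y != 0 :> nat)) |
           ((tagged y == 0 :> nat) && (tagged x != 0 :> nat))])
    || [&& (tagged x == 1 :> nat), (tagged y == 1 :> nat) &
           (((tag x).+1 == tag y :> nat) || ((tag y).+1 == tag x :> nat))].

Definition firecracker_adj (n k : nat) := @gfirecracker_adj n (fun _ => k).

(* Main.v *)
Require Import Defs.
From mathcomp Require Import all_boot all_order all_algebra zify ring lra.
Set Implicit Arguments. Unset Strict Implicit. Unset Printing Implicit Defensive.
Import Order.TTheory GRing.Theory Num.Theory.
Local Open Scope ring_scope.

Lemma cauchy_binet2 N (A1 A2 B1 B2 : nat -> int) :
  (\sum_(t < N) A1 t * B1 t) * (\sum_(t < N) A2 t * B2 t)
  - (\sum_(t < N) A1 t * B2 t) * (\sum_(t < N) A2 t * B1 t)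
  = \sum_(t < N) \sum_(s < t) (A1 s * A2 t - A1 t * A2 s) * (B1 s * B2 t - B1 t * B2 s).
Proof.
elim: N => [|N IH]; first by rewrite !big_ord0; ring.
rewrite !big_ord_recr /=.
have -> : \sum_(s < N) (A1 s * A2 N - A1 N * A2 s) * (B1 s * B2 N - B1 N * B2 s)
  = A2 N * B2 N * (\sum_(s < N) A1 s * B1 s) - A2 N * B1 N * (\sum_(s < N) A1 s * B2 s)
    - A1 N * B2 N * (\sum_(s < N) A2 s * B1 s) + A1 N * B1 N * (\sum_(s < N) A2 s * B2 s).
  rewrite !mulr_sumr -!sumrB -big_split /=; apply: eq_bigr => s _; ring.
rewrite -IH; ring.
Qed.
Definition Tp (a : nat -> int) (r s : nat) : int := if (s <= r)%N then a (r - s)%N else 0.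
Definition conv (a b : nat -> int) (n : nat) : int := \sum_(j < n.+1) a j * b (n - j)%N.

Lemma Tp_conv a b N r s : (r < N)%N ->
  Tp (conv a b) r s = \sum_(t < N) Tp b r t * Tp a t s.
Proof.
move=> rN.
case: (leqP s r) => sr; last first.
  rewrite /Tp ifF; last lia.
  rewrite big1 // => t _; case: (leqP s t) => st; last by rewrite mulr0.
  rewrite ifF ?mul0r //; lia.
rewrite -(big_mkord xpredT (fun t => Tp b r t * Tp a t s)).
rewrite (big_cat_nat _ (n := s)) //=; last lia.
rewrite (big_cat_nat _ (m := s) (n := r.+1)) //=; last lia.
rewrite [X in X + _]big1_seq; last first.
  move=> t /andP [_]; rewrite mem_index_iota => /andP [_ ts].
  rewrite /Tp [X in _ * X]ifF ?mulr0 //; lia.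
rewrite [X in _ + (_ + X)]big1_seq; last first.
  move=> t /andP [_]; rewrite mem_index_iota => /andP [rt _].
  rewrite /Tp ifF ?mul0r //; lia.
rewrite add0r addr0 /conv /Tp ifT //.
rewrite -[in RHS](add0n s) big_addn.
rewrite big_mkord.
have -> : (r.+1 - s = (r - s).+1)%N by lia.
apply: eq_bigr => u _; have ur := ltn_ord u.
rewrite ifT; last lia.
rewrite ifT; last lia.
rewrite mulrC; congr (b _ * a _); lia.
Qed.

Definition PF2 (a : nat -> int) : Prop :=
  (forall n, 0 <= a n) /\
  (forall r1 r2 s1 s2, (r1 <= r2)%N -> (s1 <= s2)%N ->
     Tp a r1 s2 * Tp a r2 s1 <= Tp a r1 s1 * Tp a r2 s2).

Lemma Tp_ge0 a r s : (forall n, 0 <= a n) -> 0 <= Tp a r s.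
Proof. by move=> h; rewrite /Tp; case: ifP. Qed.

Lemma PF2_conv a b : PF2 a -> PF2 b -> PF2 (conv a b).
Proof.
move=> [a0 ta] [b0 tb]; split.
  by move=> n; apply: sumr_ge0 => j _; apply: mulr_ge0.
move=> r1 r2 s1 s2 r12 s12.
rewrite -subr_ge0 !(@Tp_conv a b r2.+1) ?ltnS //.
rewrite (cauchy_binet2 _ (fun t => Tp b r1 t) (fun t => Tp b r2 t) (fun t => Tp a t s1) (fun t => Tp a t s2)); apply: sumr_ge0 => t _; apply: sumr_ge0 => s _.
apply: mulr_ge0; rewrite subr_ge0.
  by apply: tb => //; apply: ltnW.
by rewrite mulrC; apply: ta => //; apply: ltnW.
Qed.

Section LCNIZ.
Variable a : nat -> int.
Hypothesis a0 : forall n, 0 <= a n.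
Hypothesis lc : forall n, a n * a n.+2 <= a n.+1 * a n.+1.

Lemma ratio_mono n m : (n <= m)%N -> (forall j, (n <= j <= m.+1)%N -> 0 < a j) ->
  a n * a m.+1 <= a n.+1 * a m.
Proof.
elim: m => [|m IH] hnm hpos.
  have -> : n = 0%N by lia.
  by rewrite mulrC.
case: (eqVneq n m.+1) => [->|ne]; first by rewrite mulrC.
have IH' := IH (ltac:(lia)) (fun j hj => hpos j (ltac:(lia))).
have p1 : 0 < a m.+1 by apply: hpos; lia.
have l2 := lc m.
have h3 := a0 m.+2; have h4 := a0 n.+1.
nra.
Qed.

Lemma pair_mono d : forall u v w, (v - u = d)%N -> (u <= v)%N -> (v <= w)%N ->
  (forall j, (u <= j <= v + w - u)%N -> 0 < a j) ->
  a u * a (v + w - u)%N <= a v * a w.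
Proof.
elim: d => [|d IH] u v w hd huv hvw hpos.
  have e : v = u by lia.
  subst v. by have -> : (u + w - u = w)%N by lia.
have h1 : a u * a (v + w - u)%N <= a u.+1 * a (v + w - u).-1.
  have := @ratio_mono u (v + w - u).-1 (ltac:(lia)).
  have -> : ((v + w - u).-1.+1 = v + w - u)%N by lia.
  move=> H; apply: H => j hj; apply: hpos; lia.
have h2 := IH u.+1 v w (ltac:(lia)) (ltac:(lia)) hvw (fun j hj => hpos j (ltac:(lia))).
have e : ((v + w - u).-1 = v + w - u.+1)%N by lia.
rewrite e in h1.
exact: le_trans h1 h2.
Qed.

Hypothesis niz : forall i j k, (i <= j)%N -> (j <= k)%N -> 0 < a i -> 0 < a k -> 0 < a j.

Lemma LC_PF2 : PF2 a.
Proof.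
split => // r1 r2 s1 s2 r12 s12.
case: (leqP s2 r1) => sr; last first.
  rewrite {1}/Tp ifF; last lia.
  by rewrite mul0r; apply: mulr_ge0; apply: Tp_ge0.
rewrite /Tp !ifT; try lia.
have [z1|p1] := eqVneq (a (r1 - s2)%N) 0; first by rewrite z1 mul0r; apply: mulr_ge0.
have [z2|p2] := eqVneq (a (r2 - s1)%N) 0; first by rewrite z2 mulr0; apply: mulr_ge0.
have q1 : 0 < a (r1 - s2)%N by rewrite lt_def p1 a0.
have q2 : 0 < a (r2 - s1)%N by rewrite lt_def p2 a0.
have hpos : forall j, (r1 - s2 <= j <= r2 - s1)%N -> 0 < a j.
  by move=> j /andP [h h']; apply: (niz h h').
case: (leqP (r1 - s1) (r2 - s2)) => hc.
  have := @pair_mono _ (r1 - s2) (r1 - s1) (r2 - s2) erefl (ltac:(lia)) hc.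
  have -> : (r1 - s1 + (r2 - s2) - (r1 - s2) = r2 - s1)%N by lia.
  by apply.
have := @pair_mono _ (r1 - s2) (r2 - s2) (r1 - s1) erefl (ltac:(lia)) (ltac:(lia)).
have -> : (r2 - s2 + (r1 - s1) - (r1 - s2) = r2 - s1)%N by lia.
by rewrite [X in _ <= X]mulrC; apply.
Qed.
End LCNIZ.

Lemma PF2_lc a : PF2 a -> forall n, a n * a n.+2 <= a n.+1 * a n.+1.
Proof.
move=> [_ t] n; have := t n.+1 n.+2 0%N 1%N (leqnSn _) (leqnSn _).
by rewrite /Tp /= !subn0 !subn1.
Qed.

Lemma PF2_niz a : PF2 a ->
  forall i j k, (i <= j)%N -> (j <= k)%N -> 0 < a i -> 0 < a k -> 0 < a j.
Proof.
move=> [a0 t] i j k ij jk pi pk.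
have := t j k 0%N (j - i)%N jk (leq0n _).
rewrite /Tp !ifT; try lia.
rewrite !subn0.
have -> : (j - (j - i) = i)%N by lia.
move=> H; rewrite lt_def a0 andbT; apply/eqP => z.
move: H; rewrite z mul0r => H.
have := mulr_gt0 pi pk.
by rewrite ltNge H.
Qed.

Lemma PF2_unimodal (p : {poly int}) : PF2 (fun i => p`_i) -> unimodal p.
Proof.
move=> hp.
have lc := PF2_lc hp; have niz := PF2_niz hp; have a0 := hp.1.
simpl in lc, niz, a0.
have ex : exists k, (p`_k.+1 < p`_k) || (size p <= k)%N.
  by exists (size p); rewrite leqnn orbT.
case: (ex_minnP ex) => k Pk mink.
exists k; split.
  move=> i ik; rewrite leNgt; apply/negP => H.
  by have := mink i (ltac:(by rewrite H)); rewrite leqNgt ik.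
move=> i ki _.
case/orP: Pk => [dk | sk]; last first.
  by rewrite !nth_default //; apply: leq_trans sk _; lia.
have akpos : 0 < p`_k by apply: le_lt_trans dk.
have main : forall d, p`_(k + d).+1 <= p`_(k + d).
  elim=> [|d IH]; first by rewrite addn0 ltW.
  rewrite addnS.
  have [y0|yn] := eqVneq p`_(k + d).+1 0.
    rewrite y0 leNgt; apply/negP => zp.
    have := niz k (k + d).+1 (k + d).+2 (ltac:(lia)) (ltac:(lia)) akpos zp.
    by rewrite y0 ltxx.
  have yp : 0 < p`_(k + d).+1 by rewrite lt_def yn a0.
  have l := lc (k + d); have z0 := a0 (k + d).+2.
  nra.
have := main (i - k)%N.
by have -> : (k + (i - k) = i)%N by lia.
Qed.
Lemma coef_1X (m i : nat) : ((1 + 'X : {poly int}) ^+ m)`_i = ('C(m, i))%:R.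
Proof.
elim: m i => [|m IH] i.
  by rewrite expr0 coefC; case: i => [|i]; rewrite ?bin0 ?bin0n /= ?mulr1n ?mulr0n.
rewrite exprS mulrDl mul1r coefD coefXM IH.
case: i => [|i] /=; first by rewrite addr0 !bin0.
by rewrite IH binS natrD addrC.
Qed.

Definition base (m : nat) : {poly int} := 'X * ((1 + 'X) ^+ m - 1).

Lemma coef_base m i : (base m)`_i = if (2 <= i)%N then ('C(m, i.-1))%:R else 0.
Proof.
rewrite /base coefXM coefB coef_1X coefC.
case: i => [|[|i]] //=.
by rewrite bin0 subrr.
by rewrite subr0.
Qed.
Lemma bin_lc m j : ('C(m, j) * 'C(m, j.+2) <= 'C(m, j.+1) * 'C(m, j.+1))%N.
Proof.
case: (ltnP m j.+2) => hm; first by rewrite (bin_small hm) muln0.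
have e1 := mul_bin_left m j.
have e2 := mul_bin_left m j.+1.
set c0 := 'C(m, j) in e1 *; set c1 := 'C(m, j.+1) in e1 e2 *; set c2 := 'C(m, j.+2) in e2 *.
have f1 : (m - j = (m - j.+2).+2)%N by lia.
have f2 : (m - j.+1 = (m - j.+2).+1)%N by lia.
rewrite f1 in e1; rewrite f2 in e2.
set t := (m - j.+2)%N in e1 e2.
nia.
Qed.

Lemma PF2_base m : PF2 (fun i => (base m)`_i).
Proof.
have a0 : forall n, 0 <= (base m)`_n.
  by move=> n; rewrite coef_base; case: ifP => _ //; apply: ler0n.
apply: LC_PF2 => //.
- move=> n; rewrite !coef_base.
  case: n => [|[|n]] /=; rewrite ?mul0r ?mulr_ge0 ?ler0n //.
  by rewrite -!natrM ler_nat bin_lc.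
- move=> i j k ij jk; rewrite !coef_base.
  case: ifP => i2 //; case: ifP => k2 //; rewrite !ltr0n !bin_gt0 => hi hk.
  rewrite ifT; last lia.
  rewrite ltr0n bin_gt0; lia.
Qed.

Lemma PF2_ext a b : (forall n, a n = b n) -> PF2 a -> PF2 b.
Proof.
move=> e [a0 t]; have eT : forall r s, Tp a r s = Tp b r s by move=> r s; rewrite /Tp e.
split; first by move=> n; rewrite -e.
by move=> r1 r2 s1 s2 h1 h2; rewrite -!eT; apply: t.
Qed.

Lemma PF2_mul (p q : {poly int}) :
  PF2 (fun i => p`_i) -> PF2 (fun i => q`_i) -> PF2 (fun i => (p * q)`_i).
Proof.
move=> hp hq; apply: (PF2_ext _ (PF2_conv hp hq)) => n.
by rewrite coefM.
Qed.

Lemma PF2_one : PF2 (fun i => (1 : {poly int})`_i).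
Proof.
have eT : forall r s, Tp (fun i => (1 : {poly int})`_i) r s = (r == s)%:R.
  move=> r s; rewrite /Tp coefC.
  case: (leqP s r) => h.
    case: (eqVneq r s) => [->|ne]; first by rewrite subnn.
    by rewrite ifF //; apply/eqP; lia.
  by case: (eqVneq r s) => // e; lia.
split; first by move=> n; rewrite coefC; case: ifP.
move=> r1 r2 s1 s2 h1 h2; rewrite !eT.
case: (eqVneq r1 s2) => e1; last by rewrite mul0r mulr_ge0.
case: (eqVneq r2 s1) => e2; last by rewrite mulr0 mulr_ge0.
have -> : r1 = s1 by lia.
have -> : r2 = s2 by lia.
by rewrite !eqxx.
Qed.

Lemma PF2_prod (I : finType) (F : I -> {poly int}) :
  (forall i, PF2 (fun n => (F i)`_n)) -> PF2 (fun n => (\prod_i F i)`_n).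
Proof.
move=> h; apply: (big_ind (fun p : {poly int} => PF2 (fun n => p`_n))) => //.
- exact: PF2_one.
- by move=> x y; apply: PF2_mul.
Qed.
Definition gen (T : finType) (P : pred {set T}) : {poly int} :=
  \sum_(D : {set T} | P D) 'X^#|D|.

Lemma coef_gen (T : finType) (P : pred {set T}) i :
  (gen P)`_i = (#|[set D | P D & #|D| == i]|)%:R.
Proof.
rewrite /gen coef_sum.
under eq_bigr do rewrite coefXn.
rewrite -natr_sum -sum1_card; congr (_%:R).
rewrite big_mkcond [RHS]big_mkcond /=; apply: eq_bigr => D _.
rewrite inE; case: (P D) => //=; rewrite eq_sym; by case: (_ == _).
Qed.

Lemma Dt_gen (T : finType) (e : rel T) : Dt e = gen (total_dominating e).
Proof.
apply/polyP => j; rewrite coef_poly coef_gen /dt.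
case: ifP => // /negbT; rewrite -leqNgt => hj.
suff -> : [set D | total_dominating e D & #|D| == j] = set0 by rewrite cards0.
apply/setP => D; rewrite !inE.
have := max_card D.
case: (total_dominating e D) => //= hD; apply/negbTE/eqP => eD; by move: hj; rewrite -eD ltnNge hD.
Qed.

Lemma gen_sub (T : finType) (B : {set T}) :
  gen (fun E => E \subset B) = (1 + 'X) ^+ #|B|.
Proof.
by apply/polyP => j; rewrite coef_gen coef_1X cards_draws.
Qed.

Lemma gen_base (T : finType) (A : {set T}) (c : T) : c \in A ->
  gen (fun E => [&& E \subset A, c \in E & [exists v in E, v != c]]) = base #|A :\ c|.
Proof.
move=> cA.
have S1 : \sum_(E : {set T} | (E \subset A) && (c \in E)) 'X^#|E| = ('X * (1 + 'X) ^+ #|A :\ c| : {poly int}).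
  rewrite (@reindex_onto _ _ _ _ _ (fun F : {set T} => c |: F) (fun E => E :\ c)); last first.
    by move=> E /andP [_ cE]; rewrite setD1K.
  rewrite -gen_sub /gen mulr_sumr.
  apply: eq_big => F.
    apply/idP/idP.
      move=> /andP [/andP [sub _] /eqP eF].
      rewrite -eF; apply: setSD; exact: sub.
    move=> sF.
    have cF : c \notin F by apply/negP => cF; have := subsetP sF c cF; rewrite !inE eqxx.
    rewrite setU1K // eqxx setU11 andbT andbT.
    rewrite subUset sub1set cA /=; apply: subset_trans sF (subsetDl _ _).
  move=> /andP [/andP [_ _] /eqP eF].
  have cF : c \notin F by rewrite -eF !inE eqxx.
  by rewrite cardsU1 cF add1n exprS.
have S2 : \sum_(E : {set T} | (E \subset A) && (c \in E) && ~~ [exists v in E, v != c]) 'X^#|E| = 'X :> {poly int}.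
  rewrite (big_pred1 [set c]); first by rewrite cards1 expr1.
  move=> E /=; apply/idP/eqP.
    move=> /andP [/andP [_ cE] ex]; apply/setP => x; rewrite in_set1.
    apply/idP/eqP => [xE | ->//]; apply/eqP; apply: contraNT ex => ne.
    by apply/existsP; exists x; rewrite xE ne.
  move=> ->; rewrite sub1set cA set11 /=; apply/existsPn => v.
  by rewrite in_set1; case: eqP.
rewrite (bigID (fun E : {set T} => [exists v in E, v != c])) /= S2 in S1.
rewrite /base /gen mulrBr mulr1 -S1 addrK.
by apply: eq_bigl => E; rewrite andbA.
Qed.
Lemma card_partition_tag (T I : finType) (p : T -> I) (D : {set T}) :
  #|D| = (\sum_i #|D :&: [set u | p u == i]|)%N.
Proof.
rewrite -sum1_card (partition_big p xpredT) //=.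
apply: eq_bigr => i _; rewrite -sum1_card.
by apply: eq_bigl => u; rewrite !inE.
Qed.

Lemma gen_prod (T I : finType) (p : T -> I) (Q : I -> pred {set T}) :
  \prod_i gen (fun E => (E \subset [set u | p u == i]) && Q i E)
  = gen (fun D => [forall i, Q i (D :&: [set u | p u == i])]).
Proof.
rewrite /gen bigA_distr_big_dep.
rewrite (reindex_onto (fun D : {set T} => [ffun i => D :&: [set u | p u == i]])
   (fun f => \bigcup_i f i)); last first.
  move=> f /familyP hf; apply/ffunP => i; rewrite ffunE.
  apply/setP => u; rewrite !inE.
  apply/andP/idP.
    move=> [/bigcupP [j _ uj] /eqP pu].
    have := hf j; rewrite unfold_in => /andP [/subsetP sj _].
    by have := sj u uj; rewrite inE pu => /eqP ->.
  move=> ui; have := hf i; rewrite unfold_in => /andP [/subsetP si _].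
  split; first by apply/bigcupP; exists i.
  by have := si u ui; rewrite inE.
apply: eq_big => D.
  apply/andP/forallP.
    move=> [/familyP h _] i; have := h i; rewrite unfold_in ffunE => /andP [_ ->] //.
  move=> h; split.
    apply/familyP => i; rewrite unfold_in ffunE subsetIr /=; exact: h i.
  apply/eqP/setP => u; apply/bigcupP/idP.
    by move=> [i _]; rewrite ffunE inE => /andP [].
  by move=> uD; exists (p u) => //; rewrite ffunE !inE uD eqxx.
move=> _.
under eq_bigr do rewrite ffunE.
by rewrite prodrXr -card_partition_tag.
Qed.
Local Close Scope ring_scope.
Lemma lolli_tds n (hn : (1 <= n)%N) (D : {set 'I_n.+1}) :
  total_dominating (@lollipop_adj n) D =
  [&& D \subset setT, ord0 \in D & [exists v in D, v != ord0]].
Proof.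
rewrite subsetT /=; apply/forallP/andP.
  move=> H; split.
    have /existsP [u /andP [uD]] := H ord_max.
    rewrite /lollipop_adj /= => /andP [_ h].
    have -> : ord0 = u by apply/val_inj => /=; move: h (ltn_ord u); lia.
    exact: uD.
  have /existsP [u /andP [uD]] := H ord0.
  rewrite /lollipop_adj => /andP [h _]; apply/existsP; exists u.
  by rewrite uD eq_sym h.
move=> [c0 /existsP [u /andP [uD un]]] v.
apply/existsP.
case: (eqVneq v ord0) => [->|vn].
  exists u; rewrite uD /lollipop_adj eq_sym un /=.
  move: un (ltn_ord u); rewrite -val_eqE /=; lia.
exists ord0; rewrite c0 /lollipop_adj vn /=.
move: vn (ltn_ord v); rewrite -val_eqE /=; lia.
Qed.
Definition okb n (ks : 'I_n -> nat) (E : {set {i : 'I_n & 'I_(ks i)}}) : bool :=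
  [exists u in E, tagged u == 0 :> nat] && [exists u in E, tagged u != 0 :> nat].

Lemma sig_eq n (ks : 'I_n -> nat) (u v : {i : 'I_n & 'I_(ks i)}) :
  tag u = tag v -> (tagged u : nat) = tagged v -> u = v.
Proof.
case: u => i x; case: v => j y /= e; subst j => e.
by congr (Tagged _ _); apply: val_inj.
Qed.

Lemma gf_tds n (ks : 'I_n -> nat) (h : forall i, (3 <= ks i)%N) (D : {set {i : 'I_n & 'I_(ks i)}}) :
  total_dominating (@gfirecracker_adj n ks) D =
  [forall i, okb (D :&: [set u | tag u == i])].
Proof.
apply/forallP/forallP.
  move=> H i; apply/andP; split.
    have h2 : (2 < ks i)%N by apply: h.
    have /existsP [u /andP [uD]] := H (Tagged (fun i => 'I_(ks i)) (Ordinal h2)).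
    rewrite /gfirecracker_adj /= orbF => /and3P [/eqP ti t0 _].
    apply/existsP; exists u; rewrite !inE uD ti eqxx /=.
    by [].
  have h0 : (0 < ks i)%N by apply: leq_trans (h i).
  have /existsP [u /andP [uD]] := H (Tagged (fun i => 'I_(ks i)) (Ordinal h0)).
  rewrite /gfirecracker_adj /= andbF !orbF => /andP [/eqP ti t0].
  by apply/existsP; exists u; rewrite !inE uD ti eqxx /=.
move=> H v; have /andP [/existsP [c /andP [cD c0]] /existsP [l /andP [lD l0]]] := H (tag v).
move: cD lD; rewrite !inE => /andP [cD /eqP ct] /andP [lD /eqP lt].
apply/existsP.
case: (eqVneq (tagged v : nat) 0) => v0.
  have e : tag v == tag l by rewrite lt.
  by exists l; rewrite lD /gfirecracker_adj e /= v0 eqxx l0.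
have e : tag v == tag c by rewrite ct.
by exists c; rewrite cD /gfirecracker_adj e /= v0 c0 /= orbT.
Qed.
Local Open Scope ring_scope.

Lemma gen_ext (T : finType) (P P' : pred {set T}) : P =1 P' -> gen P = gen P'.
Proof. by move=> e; apply: eq_bigl. Qed.

Lemma gf_block n (ks : 'I_n -> nat) (i : 'I_n) (h0 : (0 < ks i)%N) :
  gen (fun E => (E \subset [set u : {i : 'I_n & 'I_(ks i)} | tag u == i]) && okb E)
  = base #|[set u : {i : 'I_n & 'I_(ks i)} | tag u == i] :\ Tagged (fun i => 'I_(ks i)) (Ordinal h0)|.
Proof.
set c := Tagged (fun i => 'I_(ks i)) (Ordinal h0).
rewrite -gen_base; last by rewrite inE.
apply: gen_ext => E /=.
case sub: (E \subset _) => //=.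
have tE : forall u, u \in E -> tag u = i.
  by move=> u uE; have := subsetP sub u uE; rewrite inE => /eqP.
have ceq : forall u, u \in E -> (tagged u : nat) = 0%N -> u = c.
  by move=> u uE t0; apply: sig_eq => //; rewrite tE.
rewrite /okb; congr andb.
  apply/existsP/idP => [[u /andP [uE /eqP t0]] | cE].
    by rewrite -(ceq u uE t0).
  by exists c; rewrite cE.
apply/existsP/existsP => [[u /andP [uE t0]] | [u /andP [uE t0]]]; exists u; rewrite uE /=.
  by apply: contraNneq t0 => ->.
by apply/eqP => /(ceq u uE) e; rewrite e eqxx in t0.
Qed.

Lemma gf_unimodal n (ks : 'I_n -> nat) : (forall i, (3 <= ks i)%N) ->
  unimodal (Dt (@gfirecracker_adj n ks)).
Proof.
move=> h; apply: PF2_unimodal.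
rewrite Dt_gen (gen_ext (gf_tds h)) -(gen_prod (fun u : {i : 'I_n & 'I_(ks i)} => tag u) (fun _ => @okb n ks)).
apply: PF2_prod => i.
have h0 : (0 < ks i)%N by apply: leq_trans (h i).
rewrite (gf_block h0); exact: PF2_base.
Qed.

Lemma lolli_unimodal n : (1 <= n)%N -> unimodal (Dt (@lollipop_adj n)).
Proof.
move=> hn; apply: PF2_unimodal.
rewrite Dt_gen (gen_ext (lolli_tds hn)) gen_base ?inE //; exact: PF2_base.
Qed.

Theorem mainTheorem8 :
  forall (n k : nat) (ks : 'I_n -> nat),
    (1 <= n)%N -> (3 <= k)%N -> (forall i, 3 <= ks i)%N ->
    [/\ unimodal (Dt (@lollipop_adj n)),
        unimodal (Dt (@firecracker_adj n k)) &
        unimodal (Dt (@gfirecracker_adj n ks))].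
Proof.
move=> n k ks hn hk hks; split.
- exact: lolli_unimodal.
- exact: (@gf_unimodal n (fun _ => k)).
- exact: gf_unimodal.
Qed.
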